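(* Let $f,w\colon\mathbb{R}^d\to[0,\infty)$ be two proper log-concave functions such that $w$ is the John function of $f$ with respect to $w$. Assume in addition that for every $\xi\in(0,\|f\|_\infty)$ there is a positive position $g$ of $w$ with $g\le f$ and $\|g\|_\infty=\xi$. Then \[ \|w\|_\infty\le\|f\|_\infty\le e^d\,\|w\|_\infty. \]
   Context: A function $\mathbb{R}^d\to[0,\infty)$ is proper log-concave if it is upper semi-continuous, log-concave, with finite positive integral. Positions of $w$ are functions $x\mapsto\alpha\,w(Ax+a)$ with $A$ a non-singular real $d\times d$ matrix, $\alpha>0$, $a\in\mathbb{R}^d$; positive positions are those with $A$ positive definite. ''$w$ is the John function of $f$ with respect to $w$'' means $w\le f$ pointwise and $\int g\le\int w$ for every position $g$ of $w$ with $g\le f$. $\|\cdot\|_\infty$ is the supremum norm. *)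

(* Defs.v *)
From HB Require Import structures.
From mathcomp Require Import all_boot all_order all_algebra.
From mathcomp Require Import all_classical all_reals all_analysis.
Set Implicit Arguments. Unset Strict Implicit. Unset Printing Implicit Defensive.
Import Order.TTheory GRing.Theory Num.Theory.
Import numFieldNormedType.Exports.
Local Open Scope classical_set_scope.
Local Open Scope ring_scope.

(* Lebesgue integral over R^d (= 'rV[R]_d) of a nonnegative extended-real
   function, as the iterated one-dimensional Lebesgue integral
   (equal to the d-dimensional Lebesgue integral by Tonelli). *)
Fixpoint int_Rd (R : realType) (d : nat) : ('rV[R]_d -> \bar R) -> \bar R :=
  match d return ('rV[R]_d -> \bar R) -> \bar R with
  | 0 => fun F => F 0
  | d'.+1 => fun F =>
      (\int[@lebesgue_measure R]_(t in setT)
         int_Rd (fun v : 'rV[R]_d' => F (row_mx (const_mx t : 'rV[R]_1) v)))%E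
  end.

Definition integral_Rd (R : realType) (d : nat) (f : 'rV[R]_d -> R) : \bar R :=
  int_Rd (fun x => (f x)%:E).

Definition sup_norm (R : realType) (d : nat) (f : 'rV[R]_d -> R) : \bar R :=
  ereal_sup (range (fun x => (f x)%:E)).

Definition upper_semicontinuous (R : realType) (d : nat) (f : 'rV[R]_d -> R) :=
  forall (x : 'rV[R]_d) (a : R), f x < a -> \forall y \near x, f y < a.

Definition log_concave (R : realType) (d : nat) (f : 'rV[R]_d -> R) :=
  forall (x y : 'rV[R]_d) (t : R), 0 <= t <= 1 ->
    f x `^ (1 - t) * f y `^ t <= f ((1 - t) *: x + t *: y).

Definition proper_log_concave (R : realType) (d : nat) (f : 'rV[R]_d -> R) :=
  [/\ forall x, 0 <= f x,
      upper_semicontinuous f,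
      log_concave f &
      (0 < integral_Rd f < +oo)%E].

(* x is a row vector, so A x is written x *m A^T *)
Definition is_position (R : realType) (d : nat) (w g : 'rV[R]_d -> R) :=
  exists (A : 'M[R]_d) (alpha : R) (a : 'rV[R]_d),
    [/\ A \in unitmx, 0 < alpha &
        forall x, g x = alpha * w (x *m A^T + a)].

Definition pos_def (R : realType) (d : nat) (A : 'M[R]_d) :=
  A^T = A /\ forall v : 'rV[R]_d, v != 0 -> 0 < (v *m A *m v^T) 0 0.

Definition is_pos_position (R : realType) (d : nat) (w g : 'rV[R]_d -> R) :=
  exists (A : 'M[R]_d) (alpha : R) (a : 'rV[R]_d),
    [/\ pos_def A, 0 < alpha &
        forall x, g x = alpha * w (x *m A^T + a)].

Definition is_John_function (R : realType) (d : nat) (f w : 'rV[R]_d -> R) :=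
  (forall x, w x <= f x) /\
  forall g : 'rV[R]_d -> R, is_position w g -> (forall x, g x <= f x) ->
    (integral_Rd g <= integral_Rd w)%E.

(* Main.v *)
Require Import Defs.
From HB Require Import structures.
From mathcomp Require Import all_boot all_order all_algebra.
From mathcomp Require Import all_classical all_reals all_analysis.
From mathcomp Require Import ring lra measurable_realfun.
Import Order.TTheory GRing.Theory Num.Theory.
Local Open Scope ring_scope.
Local Open Scope classical_set_scope.

Section aff.
Variables (R : realType) (s c : R).
Definition aff (t : measurableTypeR R) : measurableTypeR R := s * t + c.
Lemma measurable_aff : measurable_fun setT aff.
Proof.
apply: measurable_realfun.measurable_funD; last exact: measurable_cst.
apply: measurable_realfun.measurable_funM; [exact: measurable_cst | exact: measurable_id].
Qed.
Definition paff := pushforward (@lebesgue_measure R) aff.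
Let paff0 : paff set0 = 0%E.
Proof. by rewrite /paff /pushforward preimage_set0 measure0. Qed.
Let paff_ge0 A : (0 <= paff A)%E.
Proof. rewrite /paff /pushforward. exact: measure_ge0. Qed.
Let paff_sigma_additive : semi_sigma_additive paff.
Proof.
move=> F mF tF mUF; rewrite /paff /pushforward preimage_bigcup.
apply: measure_semi_sigma_additive.
- by move=> n; rewrite -[X in measurable X]setTI; exact: measurable_aff.
- apply/trivIsetP => /= i j _ _ ij; rewrite -preimage_setI.
  by move/trivIsetP : tF => /(_ _ _ _ _ ij) ->//; rewrite preimage_set0.
- by rewrite -preimage_bigcup -[X in measurable X]setTI; exact: measurable_aff.
Qed.
HB.instance Definition _ := isMeasure.Build _ _ _
  paff paff0 paff_ge0 paff_sigma_additive.
End aff.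
Arguments aff {R}. Arguments paff {R}. Arguments measurable_aff {R}.

Lemma paffE (R : realType) (s c : R) (s0 : 0 < s) (A : set (measurableTypeR R)) :
  measurable A -> lebesgue_measure A = mscale (@NngNum _ s (ltW s0)) (paff s c) A.
Proof.
move=> mA; apply: lebesgue_measure_unique => // _ [[a b]] _ <-.
change (lebesgue_measure `]a, b]%classic = (s%:E * lebesgue_measure (aff s c @^-1` `]a, b]%classic))%E).
rewrite (_ : aff s c @^-1` _ = `]((a - c) / s), ((b - c) / s)]%classic); last first.
  apply/seteqP; split => t /=; rewrite !in_itv /= /aff.
    move=> /andP[h1 h2]; apply/andP; split.
      by rewrite ltr_pdivrMr // ltrBlDr mulrC.
    by rewrite ler_pdivlMr // lerBrDr mulrC.
  move=> /andP[h1 h2]; apply/andP; split.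
    by move: h1; rewrite ltr_pdivrMr // ltrBlDr mulrC.
  by move: h2; rewrite ler_pdivlMr // lerBrDr mulrC.
rewrite !lebesgue_measure_itv /= !lte_fin ltr_pM2r ?invr_gt0 // ltrD2r.
case: ifP => _; last by rewrite mule0.
rewrite -!EFinD -EFinM; congr EFin; field; exact: lt0r_neq0.
Qed.

Import HBNNSimple.
Local Open Scope ereal_scope.

Lemma int_aff_nnsfun (R : realType) (s c : R) (s0 : (0 < s)%R)
  (phi : {nnsfun (measurableTypeR R) >-> R}) :
  \int[@lebesgue_measure R]_(t in setT) (phi (s * t + c)%R)%:E
  = (s^-1)%:E * sintegral lebesgue_measure phi.
Proof.
have mphi : measurable_fun [set: measurableTypeR R] (EFin \o phi).
  by apply/measurable_EFinP; exact: measurable_funPT.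
have -> : \int[@lebesgue_measure R]_(t in setT) (phi (s * t + c)%R)%:E =
   \int[@lebesgue_measure R]_(t in aff s c @^-1` setT) ((EFin \o phi) \o aff s c) t.
  by [].
rewrite -(@ge0_integral_pushforward _ _ _ _ _ _ (measurable_aff s c) lebesgue_measure setT (EFin \o phi)) //.
2: by move=> y _ /=; rewrite lee_fin.
have si0 : (0 <= s^-1)%R by rewrite invr_ge0 ltW.
rewrite (@eq_measure_integral _ _ _ _ (mscale (NngNum si0) lebesgue_measure)); last first.
  move=> mf A mA _; change (lebesgue_measure (aff s c @^-1` A) = (s^-1)%:E * lebesgue_measure A).
  have h := @paffE _ s c s0 A mA.
  change (lebesgue_measure A = (s%:E * lebesgue_measure (aff s c @^-1` A))) in h.
  rewrite h muleA -EFinM mulVf ?mul1e //; exact: lt0r_neq0.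
- exact: measurable_aff.
- rewrite ge0_integral_mscale //=; first by congr (_ * _); exact: integralT_nnsfun.
  by move=> x _; rewrite lee_fin.
Qed.

Lemma le_int (R : realType) (f g : measurableTypeR R -> \bar R) :
  (forall x, 0 <= f x) -> (forall x, f x <= g x) ->
  \int[@lebesgue_measure R]_(x in setT) f x <= \int[@lebesgue_measure R]_(x in setT) g x.
Proof.
move=> f0 fg; have g0 x : 0 <= g x by exact: le_trans (f0 x) (fg x).
rewrite !ge0_integralTE //; apply: ereal_sup_le => _ [h hf <-].
by exists h => //= x; exact: le_trans (hf x) (fg x).
Qed.

Lemma int_aff_ge (R : realType) (Phi : measurableTypeR R -> \bar R) (K s c : R) :
  (forall x, 0 <= Phi x) -> (0 <= K)%R -> (0 < s)%R ->
  (K / s)%:E * \int[@lebesgue_measure R]_(t in setT) Phi t <=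
  \int[@lebesgue_measure R]_(t in setT) (K%:E * Phi (s * t + c)%R).
Proof.
move=> Phi0 K0 s0.
have J0 : 0 <= \int[@lebesgue_measure R]_(t in setT) (K%:E * Phi (s * t + c)%R).
  by apply: integral_ge0 => t _; rewrite mule_ge0.
have [K00|Kp] := eqVneq K 0%R.
  by subst K; rewrite mul0r mul0e.
have Kpos : (0 < K)%R by rewrite lt0r Kp.
set J := \int[_]_(t in _) (K%:E * _).
have key : \int[@lebesgue_measure R]_(t in setT) Phi t <= (s / K)%:E * J.
  rewrite ge0_integralTE //; apply: ge_ereal_sup => _ [h hPhi <-].
  have mh : measurable_fun [set: measurableTypeR R] (EFin \o (h \o aff s c)).
    apply/measurable_EFinP.
    exact: (measurableT_comp (measurable_funPT h) (measurable_aff s c)).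
  have : \int[@lebesgue_measure R]_(t in setT) (K%:E * (h (s * t + c)%R)%:E) <= J.
    apply: le_int => [t|t]; first by rewrite mule_ge0 // lee_fin.
    by rewrite lee_wpmul2l // lee_fin.
  rewrite ge0_integralZl_EFin //; last by move=> t _; rewrite lee_fin.
  rewrite (@int_aff_nnsfun _ s c s0 h) muleA -EFinM => hJ.
  rewrite -[X in X <= _]mul1e -(@mulVf _ (K / s)%R); last first.
    by rewrite mulf_neq0 // invr_neq0 // lt0r_neq0.
  rewrite EFinM -muleA invf_div; apply: lee_wpmul2l; last exact: hJ.
  by rewrite lee_fin divr_ge0 // ltW.
apply: le_trans (lee_wpmul2l _ key) _; first by rewrite lee_fin divr_ge0 // ltW.
rewrite muleA -EFinM (_ : (K / s * (s / K) = 1)%R) ?mul1e //.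
by field; rewrite !lt0r_neq0.
Qed.

Lemma int_Rd_ge0 (R : realType) (d : nat) (F : 'rV[R]_d -> \bar R) :
  (forall x, 0 <= F x) -> 0 <= int_Rd F.
Proof.
elim: d F => [|d IH] F F0 /=; first exact: F0.
by apply: integral_ge0 => t _; apply: IH => v; exact: F0.
Qed.

Lemma row_aff (R : realType) (d : nat) (s t : R) (v : 'rV[R]_d) (b : 'rV[R]_(1 + d)) :
  (s *: row_mx (const_mx t : 'rV[R]_1) v + b =
   row_mx (const_mx (s * t + lsubmx b ord0 ord0) : 'rV[R]_1) (s *: v + rsubmx b))%R.
Proof.
rewrite -{1}(hsubmxK b) scale_row_mx add_row_mx; congr row_mx.
by apply/rowP => j; rewrite !mxE ord1.
Qed.

Lemma int_Rd_aff (R : realType) (d : nat) (G : 'rV[R]_d -> \bar R) (K s : R) (b : 'rV[R]_d) :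
  (forall x, 0 <= G x) -> (0 <= K)%R -> (0 < s)%R ->
  (K / s ^+ d)%:E * int_Rd G <= int_Rd (fun x => K%:E * G (s *: x + b)%R).
Proof.
elim: d G K b => [|d IH] G K b G0 K0 s0 /=.
  by rewrite expr0 divr1 (thinmx0 (s *: 0 + b)%R).
have Ksd : (0 <= K / s ^+ d)%R by rewrite divr_ge0 // exprn_ge0 // ltW.
pose Phi := fun r : measurableTypeR R => int_Rd (fun v : 'rV[R]_d => G (row_mx (const_mx r : 'rV[R]_1) v)).
have Phi0 r : 0 <= Phi r by apply: int_Rd_ge0 => v; exact: G0.
set b0 := lsubmx (b : 'rV[R]_(1 + d)) ord0 ord0.
apply: le_trans (@le_int R
   (fun t => (K / s ^+ d)%:E * Phi (s * t + b0)%R)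
   (fun t => int_Rd (fun v : 'rV[R]_d =>
     K%:E * G (s *: (row_mx (const_mx t : 'rV[R]_1) v : 'rV[R]_(1 + d)) + b)%R)) _ _); last first.
- move=> t; rewrite /Phi.
  have -> : (fun v : 'rV[R]_d =>
     K%:E * G (s *: (row_mx (const_mx t : 'rV[R]_1) v : 'rV[R]_(1 + d)) + b)%R) =
     (fun v => K%:E * (fun u => G (row_mx (const_mx (s * t + b0)%R : 'rV[R]_1) u)) (s *: v + rsubmx (b : 'rV[R]_(1 + d)))%R).
    by apply/funext => v; rewrite row_aff.
  by apply: IH => // u; exact: G0.
- by move=> t; rewrite mule_ge0.
- have -> : (K / s ^+ d.+1 = K / s ^+ d / s)%R by rewrite exprSr invfM mulrA.
  exact: (@int_aff_ge R Phi (K / s ^+ d) s b0 Phi0 Ksd s0).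
Qed.

Local Close Scope ereal_scope.
Local Close Scope classical_set_scope.

Lemma num_choice (R : realType) (d : nat) (g : R) : expR d%:R < g ->
  exists q : R, [/\ 0 < q, q < 1 & 1 < g `^ (1 - q) * q ^+ d].
Proof.
move=> hg.
have g0 : 0 < g := lt_trans (expR_gt0 _) hg.
set dd : R := d%:R.
have dd0 : 0 <= dd by rewrite /dd ler0n.
set L := ln g.
have Ld : dd < L.
  by rewrite /L -[X in X < _](expRK dd) ltr_ln ?posrE ?expR_gt0.
have L0 : 0 < L by exact: le_lt_trans dd0 Ld.
set q := (L + dd) / (2 * L).
have q0 : 0 < q by rewrite /q divr_gt0 // ?mulr_gt0 //; lra.
have q1 : q < 1 by rewrite /q ltr_pdivrMr ?mulr_gt0 //; lra.
exists q; split => //.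
have Xpos : 0 < g `^ (1 - q) * q ^+ d by rewrite mulr_gt0 ?powR_gt0 ?exprn_gt0.
suff : 0 < ln (g `^ (1 - q) * q ^+ d).
  by move=> h; rewrite -(@lnK _ (g `^ (1 - q) * q ^+ d)) ?posrE // expR_gt1.
rewrite lnM ?posrE ?powR_gt0 ?exprn_gt0 // ln_powR lnXn // -mulr_natl -/L -/dd.
have iq0 : 0 < q^-1 by rewrite invr_gt0.
have hq : - ln q <= q^-1 - 1.
  have := @le_ln1Dx _ (q^-1 - 1).
  rewrite (addrC 1) subrK lnV ?posrE //; apply; lra.
have key : (1 - q) * L - dd * (q^-1 - 1) = q^-1 * ((1 - q) * (L - dd)) / 2.
  rewrite /q; field; rewrite -/dd; apply/andP; split; apply: lt0r_neq0 => //; lra.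

have pos : 0 < q^-1 * ((1 - q) * (L - dd)) / 2.
  rewrite divr_gt0 // mulr_gt0 // mulr_gt0 //; lra.
have hd : dd * (- ln q) <= dd * (q^-1 - 1) by rewrite ler_wpM2l.
nra.
Qed.

Lemma pos_def_unit (R : realType) (d : nat) (A : 'M[R]_d) : pos_def A -> A \in unitmx.
Proof.
move=> [_ hA]; rewrite unitmxE unitfE; apply/negP => /det0P [v v0 vA].
by have := hA v v0; rewrite vA mul0mx mxE ltxx.
Qed.

Theorem lemmaA4 (R : realType) (d : nat) (f w : 'rV[R]_d -> R) :
  proper_log_concave f -> proper_log_concave w ->
  is_John_function f w ->
  (forall xi : R, 0 < xi -> (xi%:E < sup_norm f)%E ->
     exists g : 'rV[R]_d -> R,
       [/\ is_pos_position w g, (forall x, g x <= f x) & sup_norm g = xi%:E]) ->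
  (sup_norm w <= sup_norm f /\
   sup_norm f <= (expR d%:R)%:E * sup_norm w)%E.
Proof.
move=> [f0 _ lcf _] [w0 _ _ /andP[Iw0 Iwoo]] [wf John] hyp.
have wm x : ((w x)%:E <= sup_norm w)%E by apply: ereal_sup_ubound; exists x.
have fM x : ((f x)%:E <= sup_norm f)%E by apply: ereal_sup_ubound; exists x.
have m0 : (0 <= sup_norm w)%E by apply: le_trans (wm 0); rewrite lee_fin.
split.
  by apply: ge_ereal_sup => _ [x _ <-]; apply: le_trans (fM x); rewrite lee_fin.
set E := expR d%:R.
have E0 : 0 < E by exact: expR_gt0.
case hm : (sup_norm w) => [m| |] in wm m0 *; last first.
  by [].
  by rewrite muleC gt0_mulye ?lte_fin // leey.
rewrite lee_fin in m0.
have core : forall xi, 0 < xi -> (xi%:E < sup_norm f)%E -> xi <= E * m.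
  move=> xi xi0 xiM.
  have [g [[A [al [a [Apd al0 gE]]]] gf gsup]] := hyp xi xi0 xiM.
  have wle u : w u <= m by rewrite -lee_fin wm.
  have xile : xi <= al * m.
    rewrite -lee_fin -gsup; apply: ge_ereal_sup => _ [y _ <-]; rewrite lee_fin gE.
    by rewrite ler_wpM2l // ltW.
  have [alE|Eal] := leP al E.
    by apply: le_trans xile _; rewrite ler_wpM2r.
  exfalso.
  have mpos : 0 < m.
    have : 0 < al * m := lt_le_trans xi0 xile.
    by rewrite pmulr_rgt0.
  set ga := (al + E) / 2.
  have gaE : E < ga by rewrite /ga; lra.
  have gaal : ga < al by rewrite /ga; lra.
  have ga0 : 0 < ga := lt_trans E0 gaE.
  set th := al / ga.
  have th1 : 1 < th by rewrite /th ltr_pdivlMr // mul1r.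
  have alth : al = th * ga by rewrite /th divfK // lt0r_neq0.
  have [_ [v _ <-] hv] : exists2 y, range (fun x => (w x)%:E) y & ((m / th)%:E < y)%E.
    apply: ereal_sup_gt; rewrite -/(sup_norm w) hm lte_fin.
    by rewrite ltr_pdivrMr ?(lt_trans ltr01) // ltr_pMr.
  rewrite lte_fin ltr_pdivrMr ?(lt_trans ltr01) // in hv.
  have Au : A \in unitmx := @pos_def_unit _ _ A Apd.
  set y0 := (v - a) *m invmx A^T.
  have y0E : y0 *m A^T + a = v by rewrite /y0 mulmxKV ?unitmx_tr // subrK.
  have fy0 : al * w v <= f y0 by have := gf y0; rewrite gE y0E.
  have [q [q0 q1 qbig]] := @num_choice _ _ _ gaE.
  set t := 1 - q in qbig *.
  set s := q^-1.
  have s0 : 0 < s by rewrite invr_gt0.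
  set K := ga `^ t in qbig *.
  have K0 : 0 < K by exact: powR_gt0.
  set a' := - ((t * s) *: y0).
  pose h := fun x : 'rV[R]_d => K * w (x *m (s%:M)^T + a').
  have hpos : is_position w h.
    exists s%:M, K, a'; split => //.
    by rewrite unitmxE unitfE det_scalar expf_neq0 // lt0r_neq0.
  have hE x : x *m (s%:M)^T + a' = s *: x + a' by rewrite tr_scalar_mx mul_mx_scalar.
  have hf x : h x <= f x.
    rewrite /h hE; set u := s *: x + a'.
    have qs : q * s = 1 by rewrite /s mulfV // lt0r_neq0.
    have e1t : 1 - t = q by rewrite /t; ring.
    have xu : (1 - t) *: u + t *: y0 = x.
      rewrite e1t /u /a' scalerDr scalerN !scalerA qs scale1r mulrCA qs mulr1 subrK //.
    have := lcf u y0 t; rewrite xu => hlc.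
    apply: le_trans (hlc _); last by apply/andP; split; rewrite /t; lra.
    rewrite e1t.
    have [wu0|wupos] := eqVneq (w u) 0.
      by rewrite wu0 mulr0 mulr_ge0 ?powR_ge0.
    have wu0 : 0 < w u by rewrite lt0r wupos w0.
    have t0 : 0 <= t by rewrite /t; lra.
    have e1 : K * w u = w u `^ q * (ga * w u) `^ t.
      rewrite powRM ?(ltW ga0) ?w0 // mulrCA -powRD; last by rewrite (lt0r_neq0 wu0) implybT.
      congr (_ * _); rewrite (_ : q + t = 1) ?powRr1 ?w0 //; rewrite /t; ring.
    rewrite e1; apply: ler_pM; rewrite ?powR_ge0 //.
      by apply: ge0_ler_powR; rewrite ?nnegrE ?w0 ?f0 ?wf // ltW.
    apply: ge0_ler_powR => //; first by rewrite nnegrE mulr_ge0 ?w0 // ltW.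
      by rewrite nnegrE f0.
    apply: le_trans fy0; rewrite alth -mulrA mulrCA; apply: ler_wpM2l; first exact: ltW.
    by apply: le_trans (wle u) _; rewrite mulrC; exact: ltW.
  have hJ := John h hpos hf.
  have hlow := @int_Rd_aff R d (fun u => (w u)%:E) K s a' (fun u => w0 u) (ltW K0) s0.
  have Ih : integral_Rd h = int_Rd (fun x => (K%:E * (w (s *: x + a'))%:E)%E).
    by rewrite /integral_Rd; congr int_Rd; apply/funext => x; rewrite /h hE EFinM.
  have Ks : K / s ^+ d = K * q ^+ d by rewrite /s exprVn invrK.
  have : ((K * q ^+ d)%:E * integral_Rd w <= integral_Rd w)%E.
    by apply: le_trans hJ; rewrite Ih -Ks.
  move: Iw0 Iwoo; case: (integral_Rd w) => [r| |] //; rewrite !lte_fin -EFinM lee_fin => r0 _ hle.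
  have : r < K * q ^+ d * r by rewrite ltr_pMl.
  lra.
apply: ge_ereal_sup => _ [x _ <-]; rewrite -EFinM lee_fin.
rewrite leNgt; apply/negP => hlt.
have Em0 : 0 <= E * m by rewrite mulr_ge0 // ltW.
have h1 : 0 < (f x + E * m) / 2 by lra.
have h2 : (((f x + E * m) / 2)%:E < sup_norm f)%E.
  by apply: lt_le_trans (fM x); rewrite lte_fin; lra.
have := core _ h1 h2; lra.
Qed.
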